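(* Let $G=(V,E)$ be a finite, simple, connected graph which is Lichnerowicz sharp and distance regular. Then $G$ is effective Bonnet Myers sharp, i.e. with $K:=\min_{x\sim y}\kappa(x,y)$ one has $\operatorname{diam}_{\operatorname{eff}}(G)=\frac{\max_v\operatorname{Deg}(v)}{K}$.
   Context: $d$ is the combinatorial distance, $\operatorname{Deg}$ the degree, $\operatorname{diam}_{\operatorname{eff}}(G)=\frac{1}{|V|^2}\sum_{x,y}d(x,y)$. Laplacian $\Delta f(x)=\sum_{y\sim x}(f(y)-f(x))$. Ollivier curvature: $\kappa(x,y)=\inf\{\Delta f(x)-\Delta f(y): f(y)-f(x)=1,\ \max_{u\sim v}|f(u)-f(v)|=1\}$. Lichnerowicz sharp: the smallest positive eigenvalue $\lambda$ of $-\Delta$ equals $\min_{x\sim y}\kappa(x,y)$. Distance regular: there are numbers $b_n,c_n$ such that for every $x$ and every $z$ with $d(x,z)=n$, $z$ has $b_n$ neighbors at distance $n+1$ and $c_n$ neighbors at distance $n-1$ from $x$. *)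

(* Defs.v *)
From HB Require Import structures.
From mathcomp Require Import all_boot all_order all_algebra.
From mathcomp Require Import classical_sets reals.
Set Implicit Arguments. Unset Strict Implicit. Unset Printing Implicit Defensive.
Import Order.TTheory GRing.Theory Num.Theory.
Local Open Scope ring_scope.

Section Graph.
Variables (T : finType) (e : rel T).

Fixpoint nball (n : nat) (x : T) : {set T} :=
  match n with
  | 0 => [set x]
  | n'.+1 => nball n' x :|: [set v | [exists u in nball n' x, e u v]]
  end.

(* combinatorial distance: least n with y in the n-ball of x
   (meaningful for connected graphs, where it is < #|T|) *)
Definition dist (x y : T) : nat :=
  find (fun n => y \in nball n x) (iota 0 #|T|).

Definition Deg (x : T) : nat := #|[set y | e x y]|.

Definition maxDeg : nat := \max_(v : T) Deg v.

Definition distance_regular : Prop :=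
  exists b c : nat -> nat, forall (x z : T) (n : nat), dist x z = n ->
    #|[set w | e z w & dist x w == n.+1]| = b n /\
    #|[set w | e z w & (dist x w).+1 == n]| = c n.

Variable R : realType.

Definition diam_eff : R :=
  (#|T|%:R ^+ 2)^-1 * \sum_(x : T) \sum_(y : T) (dist x y)%:R.

Definition Laplacian (f : T -> R) (x : T) : R :=
  \sum_(y : T | e x y) (f y - f x).

(* Ollivier curvature (Muench–Wojciechowski formula) *)
Definition kappa (x y : T) : R :=
  inf [set k : R | exists f : T -> R,
         [/\ f y - f x = 1,
             \big[Num.max/0]_(p : T * T | e p.1 p.2) `|f p.1 - f p.2| = 1
           & k = Laplacian f x - Laplacian f y]].

Definition Kmin : R :=
  inf [set k : R | exists x y : T, e x y /\ k = kappa x y].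

Definition eigenvalue_negLap (lam : R) : Prop :=
  exists f : T -> R, (exists x, f x != 0) /\
    forall x, - Laplacian f x = lam * f x.

Definition smallest_pos_eigenvalue (lam : R) : Prop :=
  [/\ 0 < lam, eigenvalue_negLap lam &
      forall mu, 0 < mu -> eigenvalue_negLap mu -> lam <= mu].

Definition Lichnerowicz_sharp : Prop :=
  exists lam, smallest_pos_eigenvalue lam /\ lam = Kmin.

End Graph.

(* Main.v *)
Require Import Defs.
From HB Require Import structures.
From mathcomp Require Import all_boot all_order all_algebra.
From mathcomp Require Import classical_sets reals.
From mathcomp Require Import zify.
From mathcomp.algebra_tactics Require Import ring lra.
Set Implicit Arguments. Unset Strict Implicit. Unset Printing Implicit Defensive.
Import Order.TTheory GRing.Theory Num.Theory.

Local Close Scope ring_scope.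

Section DistLemmas.
Variables (T : finType) (e : rel T).
Hypothesis e_sym : symmetric e.
Hypothesis e_conn : forall x y : T, connect e x y.

Lemma in_nballS n x v :
  (v \in nball e n.+1 x) = (v \in nball e n x) || [exists u in nball e n x, e u v].
Proof. by rewrite /= !inE. Qed.

Lemma nball_mono n m x v : n <= m -> v \in nball e n x -> v \in nball e m x.
Proof.
elim: m => [|m IH]; first by rewrite leqn0 => /eqP ->.
rewrite leq_eqVlt => /orP [/eqP -> //|]; rewrite ltnS => /IH H /H.
by rewrite in_nballS => ->.
Qed.

Lemma path_nball x p : path e x p -> last x p \in nball e (size p) x.
Proof.
elim/last_ind: p => [|p z IH]; first by rewrite /= inE.
rewrite rcons_path last_rcons size_rcons => /andP [/IH H1 H2].
by rewrite in_nballS; apply/orP; right; apply/existsP; exists (last x p); rewrite H1.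
Qed.

Lemma conn_nball x y : exists2 n, n < #|T| & y \in nball e n x.
Proof.
have /connectP [p Hp ->] := e_conn x y.
case: (shortenP Hp) => p' Hp' Hu _.
exists (size p'); last exact: path_nball.
have := max_card (mem (x :: p')); rewrite (card_uniqP Hu) /=; by [].
Qed.

Lemma dist_spec x y :
  [/\ dist e x y < #|T|, y \in nball e (dist e x y) x &
      forall i, i < dist e x y -> y \notin nball e i x].
Proof.
have [n Hn Hy] := conn_nball x y.
set P := (fun n => y \in nball e n x).
have Hhas : has P (iota 0 #|T|).
  by apply/hasP; exists n => //; rewrite mem_iota.
have Hlt : dist e x y < #|T|.
  by rewrite /dist -/P; have := Hhas; rewrite has_find size_iota.
split => //.
  have := nth_find 0 Hhas; rewrite nth_iota //.
move=> i Hi; have := before_find 0 Hi; rewrite nth_iota //; last by lia.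
by rewrite /P => ->.
Qed.

Lemma in_nball_dist x y n : (y \in nball e n x) = (dist e x y <= n).
Proof.
have [H1 H2 H3] := dist_spec x y.
apply/idP/idP => [Hy|Hd]; last exact: nball_mono Hd H2.
rewrite leqNgt; apply/negP => /H3; by rewrite Hy.
Qed.

Lemma dist_xx x : dist e x x = 0.
Proof. by apply/eqP; rewrite -leqn0 -(in_nball_dist x x 0) /= inE. Qed.

Lemma dist0 x y : dist e x y = 0 -> y = x.
Proof. move=> H; have : dist e x y <= 0 by rewrite H.
by rewrite -(in_nball_dist x y 0) /= inE => /eqP. Qed.

Lemma dist_edge x u v : e u v -> dist e x v <= (dist e x u).+1.
Proof.
move=> Huv; rewrite -in_nball_dist in_nballS; apply/orP; right.
by apply/existsP; exists u; rewrite Huv in_nball_dist leqnn.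
Qed.

Lemma dist_edge' x u v : e u v -> dist e x u <= (dist e x v).+1.
Proof. by rewrite e_sym; apply: dist_edge. Qed.

Lemma dist_pred x v n : dist e x v = n.+1 -> exists u, e u v /\ dist e x u = n.
Proof.
move=> H.
have : v \in nball e n.+1 x by rewrite in_nball_dist H.
rewrite in_nballS in_nball_dist H ltnn /= => /existsP [u /andP [Hu Huv]].
exists u; split => //; move: Hu; rewrite in_nball_dist => Hu.
have := dist_edge x Huv; rewrite H; lia.
Qed.

Lemma dist_levels x y n k : dist e x y = n -> k <= n -> exists v, dist e x v = k.
Proof.
elim: n y => [|n IH] y Hy Hk.
  by exists y; rewrite Hy; lia.
rewrite leq_eqVlt in Hk; case/orP: Hk => [/eqP ->|Hk]; first by exists y.
have [u [_ Hu]] := dist_pred Hy; exact: IH Hu Hk.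
Qed.

End DistLemmas.

Local Close Scope ring_scope.
Local Open Scope ring_scope.

Section LapLemmas.
Variables (T : finType) (e : rel T) (R : realType).
Hypothesis e_sym : symmetric e.

Lemma sum_Lap (f : T -> R) : \sum_x Laplacian e f x = 0.
Proof.
rewrite /Laplacian.
under eq_bigr => x _ do rewrite sumrB.
rewrite sumrB.
have -> : \sum_x \sum_(y | e x y) f y = \sum_x \sum_(y | e x y) f x.
  rewrite (exchange_big_dep xpredT) //=.
  by apply: eq_bigr => y _; apply: eq_bigl => x; rewrite e_sym.
by rewrite subrr.
Qed.

Lemma Lap_lin (f : T -> R) a c x :
  Laplacian e (fun y => a * f y + c) x = a * Laplacian e f x.
Proof.
rewrite /Laplacian mulr_sumr; apply: eq_bigr => y _; ring.
Qed.

Definition Lip (f : T -> R) : R :=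
  \big[Num.max/0]_(p : T * T | e p.1 p.2) `|f p.1 - f p.2|.

Lemma Lip_le f u v : e u v -> `|f u - f v| <= Lip f.
Proof. by move=> H; apply: (@le_bigmax_cond _ _ _ 0 (u, v) (fun p => e p.1 p.2)). Qed.

Lemma Lip_eq1 f : (forall u v, e u v -> `|f u - f v| <= 1) ->
  (exists u v, e u v /\ `|f u - f v| = 1) -> Lip f = 1.
Proof.
move=> H1 [u [v [Huv H2]]]; apply/eqP; rewrite eq_le; apply/andP; split.
  by apply: bigmax_le => // p Hp; apply: H1.
by rewrite -H2; apply: Lip_le.
Qed.

Lemma Lap_lb f x : Lip f = 1 -> - (\sum_(v | e x v) 1) <= Laplacian e f x.
Proof.
move=> HL; rewrite /Laplacian -sumrN; apply: ler_sum => v Hv.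
have := Lip_le f Hv; rewrite HL distrC ler_norml => /andP [] //.
Qed.

Lemma Lap_ub f x : Lip f = 1 -> Laplacian e f x <= \sum_(v | e x v) 1.
Proof.
move=> HL; rewrite /Laplacian; apply: ler_sum => v Hv.
have := Lip_le f Hv; rewrite HL distrC ler_norml => /andP [] //.
Qed.

Lemma kappa_ub (f : T -> R) x y : f y - f x = 1 -> Lip f = 1 ->
  kappa e R x y <= Laplacian e f x - Laplacian e f y.
Proof.
move=> H1 H2; rewrite /kappa.
apply: ge_inf; last by exists f; split.
exists (- (\sum_(v | e x v) 1) - \sum_(v | e y v) (1 : R)).
move=> k [g [_ Hg ->]].
have Hg' : Lip g = 1 by [].
have := Lap_lb x Hg'; have := Lap_ub y Hg'; lra.
Qed.

Lemma Kmin_lb z w : e z w -> Kmin e R <= kappa e R z w.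
Proof.
move=> Hzw; rewrite /Kmin.
apply: ge_inf; last by exists z, w.
exists (- \sum_(p : T * T) `|kappa e R p.1 p.2|).
move=> k [x [y [_ ->]]].
rewrite (bigD1 (x, y)) //=.
have : 0 <= \sum_(p : T * T | p != (x, y)) `|kappa e R p.1 p.2|.
  by apply: sumr_ge0 => p _.
have := ler_norm (- kappa e R x y); rewrite normrN.
lra.
Qed.

End LapLemmas.

Local Close Scope ring_scope.
Local Open Scope ring_scope.

Lemma sum_const_card (R : realType) (T : finType) (P : pred T) (k : R) :
  \sum_(v | P v) k = #|P|%:R * k.
Proof. by rewrite sumr_const mulr_natl. Qed.

Section DRG.
Variables (T : finType) (e : rel T) (R : realType).
Hypothesis e_sym : symmetric e.
Hypothesis e_irr : irreflexive e.
Hypothesis e_conn : forall x y : T, connect e x y.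
Variables (b c : nat -> nat).
Hypothesis hbc : forall (x z : T) (n : nat), dist e x z = n ->
    #|[set w | e z w & dist e x w == n.+1]| = b n /\
    #|[set w | e z w & (dist e x w).+1 == n]| = c n.

Notation d := (dist e).

Lemma Deg_b0 v : Deg e v = b 0.
Proof.
have [<- _] := hbc (dist_xx e_conn v).
rewrite /Deg; apply: eq_card => w; rewrite !inE.
case Hw: (e v w) => //=.
have := dist_edge e_conn v Hw; rewrite dist_xx //.
have : d v w != 0.
  apply/eqP => /(dist0 e_conn) Hwv; move: Hw; rewrite Hwv e_irr //.
lia.
Qed.

Lemma c0 (x : T) : c 0 = 0%N.
Proof.
have [_ <-] := hbc (dist_xx e_conn x).
by apply/eqP; rewrite cards_eq0; apply/eqP/setP => w; rewrite !inE andbF.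
Qed.

Lemma nbr_levels x y v : e y v ->
  [\/ d x v = (d x y).+1, (d x v).+1 = d x y | d x v = d x y].
Proof.
move=> H; have := dist_edge e_conn x H; have := dist_edge' e_sym e_conn x H.
move=> H1 H2.
case: (ltngtP (d x v) (d x y)) => Hc.
- apply: Or32; lia.
- apply: Or31; lia.
- by apply: Or33.
Qed.

Lemma split3 x y (H : T -> R) :
  \sum_(v | e y v) H v =
  \sum_(v | e y v && (d x v == (d x y).+1)) H v +
  \sum_(v | e y v && ((d x v).+1 == d x y)) H v +
  \sum_(v | e y v && (d x v == d x y)) H v.
Proof.
rewrite (bigID (fun v => d x v == (d x y).+1)) /= -addrA; congr (_ + _).
rewrite (bigID (fun v => (d x v).+1 == d x y)) /=; congr (_ + _).
  apply: eq_bigl => v; case: (e y v) => //=.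
  case: eqP; case: eqP => //; lia.
apply: eq_bigl => v; case Hv: (e y v) => //=.
have := nbr_levels x Hv; case=> Hc; repeat (case: eqP => /=); lia.
Qed.

Lemma card_b x y n : d x y = n ->
  #|[pred v | e y v && (d x v == n.+1)]| = b n.
Proof.
move=> Hn; have [<- _] := hbc Hn; apply: eq_card => v; by rewrite !inE.
Qed.

Lemma card_c x y n : d x y = n ->
  #|[pred v | e y v && ((d x v).+1 == n)]| = c n.
Proof.
move=> Hn; have [_ <-] := hbc Hn; apply: eq_card => v; by rewrite !inE.
Qed.

Lemma F1 x y n (G : nat -> R) : d x y = n ->
  \sum_(v | e y v) (G (d x v) - G n) =
  (b n)%:R * (G n.+1 - G n) + (c n)%:R * (G n.-1 - G n).
Proof.
move=> Hn; rewrite (split3 x y) Hn.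
rewrite [X in _ + _ + X]big1; last first.
  by move=> v /andP [_ /eqP ->]; rewrite subrr.
rewrite addr0; congr (_ + _).
  rewrite (eq_bigr (fun _ => G n.+1 - G n)); last by move=> v /andP [_ /eqP ->].
  by rewrite sum_const_card (card_b Hn).
rewrite (eq_bigr (fun _ => G n.-1 - G n)); last first.
  by move=> v /andP [_ /eqP <-].
by rewrite sum_const_card (card_c Hn).
Qed.

Definition ecc x := (\max_(y : T) d x y)%N.

Lemma dist_le_ecc x y : (d x y <= ecc x)%N.
Proof. exact: (@leq_bigmax T (fun y => d x y) y). Qed.

Lemma ecc_attained x : exists y, d x y = ecc x.
Proof.
by exists [arg max_(i > x | xpredT i) d x i]%N; rewrite /ecc (@bigop.bigmax_eq_arg _ x).
Qed.

Lemma level_nonempty x k : (k <= ecc x)%N -> exists v, d x v = k.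
Proof.
have [y Hy] := ecc_attained x; move=> Hk; apply: (dist_levels e_conn Hy Hk).
Qed.

Lemma b_ecc x : b (ecc x) = 0%N.
Proof.
have [y Hy] := ecc_attained x.
have [<- _] := hbc Hy.
apply/eqP; rewrite cards_eq0; apply/eqP/setP => w; rewrite !inE.
have := dist_le_ecc x w; case: (e y w) => //=; apply: contraTF => /eqP; lia.
Qed.

Lemma b_pos x m : (m < ecc x)%N -> (0 < b m)%N.
Proof.
move=> Hm; have [w Hw] := level_nonempty Hm.
have [u [Huw Hu]] := dist_pred e_conn Hw.
have [<- _] := hbc Hu.
by apply/card_gt0P; exists w; rewrite !inE Huw Hw eqxx.
Qed.

Lemma c_pos x m : (0 < m)%N -> (m <= ecc x)%N -> (0 < c m)%N.
Proof.
move=> H0 Hm; have [v Hv] := level_nonempty Hm.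
have Hv' : d x v = (m.-1).+1 by rewrite Hv; lia.
have [u [Huv Hu]] := dist_pred e_conn Hv'.
have [_ <-] := hbc Hv.
by apply/card_gt0P; exists u; rewrite !inE -e_sym Huv Hu /=; apply/eqP; lia.
Qed.

Lemma C1 x m (f : nat -> R) : (m < ecc x)%N ->
  (forall n, (n < ecc x)%N -> `|f n.+1 - f n| <= 1) -> f m.+1 - f m = 1 ->
  Kmin e R <= ((b m)%:R * (f m.+1 - f m) + (c m)%:R * (f m.-1 - f m))
            - ((b m.+1)%:R * (f m.+2 - f m.+1) + (c m.+1)%:R * (f m - f m.+1)).
Proof.
move=> Hm Hf Hm1.
have [w Hw] := level_nonempty Hm.
have [z [Hzw Hz]] := dist_pred e_conn Hw.
pose F := fun v => f (d x v).
have HL : Lip e F = 1.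
  apply: Lip_eq1.
    move=> u v Huv; rewrite /F.
    have := dist_le_ecc x u; have := dist_le_ecc x v.
    case: (nbr_levels x Huv) => Hc Hu Hv.
    - rewrite Hc distrC; apply: Hf; lia.
    - rewrite -Hc; apply: Hf; lia.
    - by rewrite Hc subrr normr0.
  exists z, w; split => //; rewrite /F Hz Hw distrC Hm1 normr1 //.
have := Kmin_lb R Hzw.
have Hfw : F w - F z = 1 by rewrite /F Hw Hz.
have Hk := kappa_ub Hfw HL.
rewrite /Laplacian in Hk.
have E1 : \sum_(v | e z v) (F v - F z) =
   (b m)%:R * (f m.+1 - f m) + (c m)%:R * (f m.-1 - f m).
  by rewrite /F Hz (F1 _ Hz).
have E2 : \sum_(v | e w v) (F v - F w) =
   (b m.+1)%:R * (f m.+2 - f m.+1) + (c m.+1)%:R * (f m - f m.+1).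
  by rewrite /F Hw (F1 _ Hw).
rewrite E1 E2 in Hk.
move=> H; exact: le_trans H Hk.
Qed.

End DRG.

Local Close Scope ring_scope.
Local Open Scope ring_scope.

Section Radial.
Variables (T : finType) (e : rel T) (R : realType).
Hypothesis e_sym : symmetric e.
Hypothesis e_irr : irreflexive e.
Hypothesis e_conn : forall x y : T, connect e x y.
Variables (b c : nat -> nat).
Hypothesis hbc : forall (x z : T) (n : nat), dist e x z = n ->
    #|[set w | e z w & dist e x w == n.+1]| = b n /\
    #|[set w | e z w & (dist e x w).+1 == n]| = c n.
Variables (K : R) (phi : T -> R).
Hypothesis hphi : forall y, - Laplacian e phi y = K * phi y.

Notation d := (dist e).

Definition Sph x n : {set T} := [set y | d x y == n].
Definition kk x n : R := #|Sph x n|%:R.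
Definition Phi x n : R := \sum_(y in Sph x n) phi y.
Definition gg x n : R := Phi x n / kk x n.

Lemma EXp x n (F : T -> R) :
  \sum_(y in Sph x n) \sum_(v | e y v && (d x v == n.+1)) F v =
  (c n.+1)%:R * \sum_(v in Sph x n.+1) F v.
Proof.
rewrite (exchange_big_dep (fun v => d x v == n.+1)) /=; last by move=> y v _ /andP [_ ->].
rewrite mulr_sumr; apply: eq_big => [v|v Hv]; first by rewrite inE.
rewrite sum_const_card; congr (_ * _); congr (_%:R).
have Hv' : d x v = n.+1 by apply/eqP.
rewrite -(card_c hbc Hv'); apply: eq_card => y; rewrite unfold_in /= !inE Hv' eqxx andbT eqSS e_sym.
by rewrite andbC.
Qed.

Lemma EXm x n (F : T -> R) :
  \sum_(y in Sph x n.+1) \sum_(v | e y v && ((d x v).+1 == n.+1)) F v =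
  (b n)%:R * \sum_(v in Sph x n) F v.
Proof.
rewrite (exchange_big_dep (fun v => d x v == n)) /=; last by move=> y v _ /andP [_]; rewrite eqSS.
rewrite mulr_sumr; apply: eq_big => [v|v Hv]; first by rewrite inE.
rewrite sum_const_card; congr (_ * _); congr (_%:R).
have Hv' : d x v = n by apply/eqP.
rewrite -(card_b hbc Hv'); apply: eq_card => y; rewrite unfold_in /= !inE Hv' eqxx andbT e_sym.
by rewrite andbC.
Qed.

Lemma kb x n : kk x n * (b n)%:R = kk x n.+1 * (c n.+1)%:R.
Proof.
have := EXp x n (fun _ => 1).
rewrite (eq_bigr (fun _ => (b n)%:R)); last first.
  move=> y; rewrite inE => /eqP Hy; rewrite sum_const_card mulr1.
  by rewrite (card_b hbc Hy).
rewrite !sumr_const /kk => H; rewrite mulrC [RHS]mulrC -H; exact: mulr_natr.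
Qed.

Lemma Phi_kg x n : Phi x n = kk x n * gg x n.
Proof.
rewrite /gg /kk; case: (posnP #|Sph x n|) => H.
  rewrite H mul0r /Phi; move/eqP: H; rewrite cards_eq0 => /eqP ->.
  by rewrite big_set0.
by rewrite mulrC divfK // pnatr_eq0 -lt0n.
Qed.

Lemma zero_level x n :
  \sum_(y in Sph x n) \sum_(v | e y v && (d x v == n)) (phi v - phi y) = 0.
Proof.
under eq_bigr => y _ do rewrite sumrB.
rewrite sumrB; apply/eqP; rewrite subr_eq0; apply/eqP.
rewrite (exchange_big_dep (fun v => d x v == n)) /=; last by move=> y v _ /andP [_ ->].
apply: eq_big => [v|v Hv]; first by rewrite inE.
apply: eq_bigl => y; rewrite !inE e_sym.
have -> : (d x v == n) = true by move: Hv.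
by rewrite andbT andbC.
Qed.

Lemma sphere_sum x n :
  \sum_(y in Sph x n) Laplacian e phi y =
  (c n.+1)%:R * Phi x n.+1 - (b n)%:R * Phi x n +
  (if n is m.+1 then (b m)%:R * Phi x m - (c n)%:R * Phi x n else 0).
Proof.
rewrite /Laplacian.
rewrite (eq_bigr (fun y =>
   \sum_(v | e y v && (d x v == n.+1)) (phi v - phi y) +
   \sum_(v | e y v && ((d x v).+1 == n)) (phi v - phi y) +
   \sum_(v | e y v && (d x v == n)) (phi v - phi y))); last first.
  by move=> y; rewrite inE => /eqP Hy; rewrite (split3 e_sym e_conn x y) Hy.
rewrite !big_split /= zero_level addr0.
congr (_ + _).
  under eq_bigr => y _ do rewrite sumrB.
  rewrite sumrB EXp; congr (_ - _).
  rewrite /Phi mulr_sumr; apply: eq_bigr => y; rewrite inE => /eqP Hy.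
  by rewrite sum_const_card (card_b hbc Hy).
case: n => [|m].
  by rewrite big1 // => y _; rewrite big_pred0 // => v; rewrite andbF.
under eq_bigr => y _ do rewrite sumrB.
rewrite sumrB EXm; congr (_ - _).
rewrite /Phi mulr_sumr; apply: eq_bigr => y; rewrite inE => /eqP Hy.
by rewrite sum_const_card (card_c hbc Hy).
Qed.

Lemma sphere_lap x n : \sum_(y in Sph x n) Laplacian e phi y = - K * Phi x n.
Proof.
rewrite /Phi mulr_sumr; apply: eq_bigr => y _.
by rewrite mulNr -hphi opprK.
Qed.

Lemma Eq_radial x n : (n <= ecc e x)%N ->
  (b n)%:R * (gg x n.+1 - gg x n) + (c n)%:R * (gg x n.-1 - gg x n) = - K * gg x n.
Proof.
move=> Hn.
have [v Hv] := level_nonempty e_conn Hn.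
have Hk : kk x n != 0.
  rewrite /kk pnatr_eq0 -lt0n; apply/card_gt0P; exists v; by rewrite inE Hv.
have S := sphere_sum x n; rewrite sphere_lap !Phi_kg in S.
apply: (mulfI Hk).
case: n Hn Hv S Hk => [|m] Hn Hv S Hk.
  have KB := kb x 0.
  have KB' : kk x 0 * (b 0)%:R * gg x 1 = kk x 1 * (c 1)%:R * gg x 1 by rewrite KB.
  rewrite (c0 e_conn hbc x) mul0r addr0 in S *.
  lra.
have KB1 : kk x m.+1 * (b m.+1)%:R * gg x m.+2 = kk x m.+2 * (c m.+2)%:R * gg x m.+2.
  by rewrite kb.
have KB0 : kk x m * (b m)%:R * gg x m = kk x m.+1 * (c m.+1)%:R * gg x m.
  by rewrite kb.
rewrite /= in S *.
rewrite Phi_kg in S. lra.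
Qed.

Lemma gg0 x : gg x 0 = phi x.
Proof.
rewrite /gg /Phi /kk.
have -> : Sph x 0 = [set x].
  apply/setP => y; rewrite !inE; apply/idP/idP => [/eqP/(dist0 e_conn) ->|/eqP ->] //.
  by rewrite dist_xx.
by rewrite big_set1 cards1 divr1.
Qed.

End Radial.

Local Close Scope ring_scope.
Local Open Scope ring_scope.

Section Seq.
Variables (R : realType) (b c : nat -> nat) (K : R) (N0 : nat).
Hypothesis K_gt0 : 0 < K.
Hypothesis c_0 : c 0 = 0%N.
Hypothesis b_N0 : b N0 = 0%N.
Hypothesis c_pos : forall m, (0 < m)%N -> (m <= N0)%N -> (0 < c m)%N.
Hypothesis b_pos : forall m, (m < N0)%N -> (0 < b m)%N.
Hypothesis curv : forall m (f : nat -> R), (m < N0)%N ->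
  (forall n, (n < N0)%N -> `|f n.+1 - f n| <= 1) -> f m.+1 - f m = 1 ->
  K <= ((b m)%:R * (f m.+1 - f m) + (c m)%:R * (f m.-1 - f m))
            - ((b m.+1)%:R * (f m.+2 - f m.+1) + (c m.+1)%:R * (f m - f m.+1)).

Definition Eq (g : nat -> R) := forall n, (n <= N0)%N ->
  (b n)%:R * (g n.+1 - g n) + (c n)%:R * (g n.-1 - g n) = - K * g n.

Lemma dS n : (n.+1)%:R - n%:R = 1 :> R.
Proof. by rewrite -natr1; ring. Qed.

Lemma dS' n : n%:R - (n.+1)%:R = -1 :> R.
Proof. by rewrite -natr1; ring. Qed.

Lemma curv_id j : (j < N0)%N ->
  K <= (b j)%:R - (c j)%:R - (b j.+1)%:R + (c j.+1)%:R.
Proof.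
move=> Hj.
have H1 : forall n, (n < N0)%N -> `|(n.+1)%:R - n%:R| <= (1 : R).
  by move=> n _; rewrite dS normr1.
have := @curv j (fun n => n%:R) Hj H1 (dS j).
rewrite !dS dS' !mulr1.
case: j Hj => [|j] Hj; first by rewrite c_0 /= mul0r; lra.
by rewrite /= dS' !mulrN1; lra.
Qed.

Lemma prop_step (f : nat -> R) j : Eq f ->
  (forall n, (n < N0)%N -> `|f n.+1 - f n| <= 1) ->
  (j < N0)%N -> f j.+1 - f j = 1 ->
  ((0 < j)%N -> f j - f j.-1 = 1) /\ ((j.+1 < N0)%N -> f j.+2 - f j.+1 = 1).
Proof.
move=> HE HL Hj H1.
have E0 := HE j (ltnW Hj).
have E1 := HE j.+1 Hj.
have Cid := curv_id Hj.
have X : (c j)%:R * (f j.-1 - f j + 1) + (b j.+1)%:R * (1 - (f j.+2 - f j.+1)) <= 0.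
  have Hm : f j - f j.+1 = -1 by lra.
  rewrite Hm mulrN1 in E1. rewrite H1 mulr1 in E0.
  have KK : K * f j.+1 - K * f j = K by rewrite -mulrBr H1 mulr1.
  lra.
have P1 : 0 <= (c j)%:R * (f j.-1 - f j + 1).
  apply: mulr_ge0 => //.
  case: j Hj H1 E0 E1 Cid X => [|j] Hj H1 E0 E1 Cid X; first by rewrite /= subrr add0r.
  have := HL j (ltnW Hj); rewrite /= ler_norml => /andP [A B]; lra.
have P2 : 0 <= (b j.+1)%:R * (1 - (f j.+2 - f j.+1)).
  case: (ltnP j.+1 N0) => Hj1.
    apply: mulr_ge0 => //.
    have := HL j.+1 Hj1; rewrite ler_norml => /andP [A B]; lra.
  have -> : j.+1 = N0 by lia.
  by rewrite b_N0 mul0r.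
have Z1 : (c j)%:R * (f j.-1 - f j + 1) = 0 by lra.
have Z2 : (b j.+1)%:R * (1 - (f j.+2 - f j.+1)) = 0 by lra.
split.
  move=> Hj0; move: Z1 => /eqP; rewrite mulf_eq0 pnatr_eq0.
  have := c_pos Hj0 (ltnW Hj); rewrite lt0n => /negbTE -> /= /eqP; lra.
move=> Hj1; move: Z2 => /eqP; rewrite mulf_eq0 pnatr_eq0.
have := b_pos Hj1; rewrite lt0n => /negbTE -> /= /eqP; lra.
Qed.

Lemma Eq_nz (g : nat -> R) : Eq g -> g 0 != 0 -> (0 < N0)%N.
Proof.
move=> HE Hg0; rewrite lt0n; apply/negP => /eqP HN.
have Hb0 : b 0 = 0%N by move: b_N0; rewrite HN.
have := HE 0 (leq0n _); rewrite c_0 Hb0 !mul0r add0r => /esym/eqP.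
rewrite mulf_eq0 oppr_eq0 (negbTE Hg0) orbF => /eqP HK; move: K_gt0; rewrite HK ltxx //.
Qed.

Lemma seq_main (g : nat -> R) : Eq g -> g 0 != 0 ->
  forall n, (n <= N0)%N -> (b n)%:R - (c n)%:R = (b 0)%:R - K * n%:R.
Proof.
move=> HE Hg0.
have HN := Eq_nz HE Hg0.
pose dl := fun n => g n.+1 - g n.
pose L := \big[Num.max/0]_(i < N0) `|dl i|.
have [m Hm] : exists m : 'I_N0, L = `|dl m|.
  by eexists; apply: (@bigmax_eq_arg _ _ _ _ (Ordinal HN)) => //.
have HLe : forall n, (n < N0)%N -> `|dl n| <= `|dl m|.
  move=> n Hn; rewrite -Hm.
  exact: (@le_bigmax_cond _ _ _ 0 (Ordinal Hn) xpredT (fun i : 'I_N0 => `|dl i|)).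
have Hdm : dl m != 0.
  apply/negP => /eqP H0.
  have H00 : dl 0 = 0.
    apply/normr0_eq0/eqP; rewrite eq_le normr_ge0 andbT; have := HLe 0 HN; by rewrite H0 normr0.
  have := HE 0 (leq0n _); rewrite c_0 mul0r addr0.
  rewrite -/(dl 0) H00 mulr0 => /esym/eqP.
  rewrite mulf_eq0 oppr_eq0 (negbTE Hg0) orbF => /eqP HK; move: K_gt0; rewrite HK ltxx //.
pose f := fun n => g n / dl m.
have Ef : Eq f.
  move=> n Hn; rewrite /f -!mulrBl !mulrA -mulrDl (HE n Hn); ring.
have HLf : forall n, (n < N0)%N -> `|f n.+1 - f n| <= 1.
  move=> n Hn; rewrite /f -mulrBl normrM normfV ler_pdivrMr ?normr_gt0 // mul1r.
  exact: HLe.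
have Hfm : f m.+1 - f m = 1 by rewrite /f -mulrBl divff.
have Hdown : forall k, (k <= m)%N -> f (m - k)%N.+1 - f (m - k)%N = 1.
  elim=> [|k IH] Hk; first by rewrite subn0.
  have [H1 _] := prop_step (j := (m - k)%N) Ef HLf (leq_ltn_trans (leq_subr _ _) (ltn_ord m)) (IH (ltnW Hk)).
  have := H1 ltac:(lia).
  have -> : (m - k)%N.-1 = (m - k.+1)%N by lia.
  have -> : (m - k)%N = (m - k.+1)%N.+1 by lia.
  by [].
have Hup : forall k, (m + k < N0)%N -> f (m + k)%N.+1 - f (m + k)%N = 1.
  elim=> [|k IH] Hk; first by rewrite addn0.
  have [_ H2] := prop_step (j := (m + k)%N) Ef HLf ltac:(lia) (IH ltac:(lia)).
  have := H2 ltac:(lia).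
  by rewrite addnS.
have Hall : forall j, (j < N0)%N -> f j.+1 - f j = 1.
  move=> j Hj; case: (leqP j m) => Hjm.
    have := Hdown (m - j)%N (leq_subr _ _); have -> : (m - (m - j))%N = j by lia. by [].
  have := Hup (j - m)%N ltac:(lia); have -> : (m + (j - m))%N = j by lia. by [].
have Hlin : forall n, (n <= N0)%N -> f n = f 0 + n%:R.
  elim=> [|n IH] Hn; first by rewrite addr0.
  have := Hall n Hn; rewrite (IH (ltnW Hn)) -natr1; lra.
have Hf0 : (b 0)%:R = - K * f 0.
  have := Ef 0 (leq0n _); rewrite c_0 mul0r addr0 (Hall 0 HN) mulr1 //.
move=> n Hn.
have E := Ef n Hn.
have B : (b n)%:R * (f n.+1 - f n) = (b n)%:R.
  case: (ltnP n N0) => Hn'; first by rewrite Hall // mulr1.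
  have -> : n = N0 by lia. by rewrite b_N0 mul0r.
have C : (c n)%:R * (f n.-1 - f n) = - (c n)%:R.
  case: n Hn {E B} => [|n] Hn; first by rewrite c_0 /= subrr mulr0 oppr0.
  have := Hall n Hn; rewrite /= => H; have -> : f n - f n.+1 = -1 by lra.
  by rewrite mulrN1.
rewrite B C (Hlin n Hn) in E.
rewrite Hf0 mulrDr in E *; lra.
Qed.

End Seq.

Local Close Scope ring_scope.
Local Open Scope ring_scope.

Lemma level_transfer (T : finType) (e : rel T)
  (e_conn : forall x y : T, connect e x y) (b c : nat -> nat)
  (hbc : forall (x z : T) (n : nat), dist e x z = n ->
    #|[set w | e z w & dist e x w == n.+1]| = b n /\
    #|[set w | e z w & (dist e x w).+1 == n]| = c n)
  x x' n : (exists y, dist e x' y = n) -> exists y, dist e x y = n.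
Proof.
elim: n => [|n IH] [y Hy]; first by exists x; apply: dist_xx.
have [z [Hzy Hz]] := dist_pred e_conn Hy.
have [z0 Hz0] := IH (ex_intro _ z Hz).
have Hb : (0 < b n)%N.
  have [<- _] := hbc _ _ _ Hz.
  by apply/card_gt0P; exists y; rewrite !inE Hzy Hy eqxx.
have [Hc _] := hbc _ _ _ Hz0.
rewrite -Hc in Hb; have [w] := card_gt0P Hb.
rewrite !inE => /andP [_ /eqP Hw]; by exists w.
Qed.

Unset Implicit Arguments.
Theorem theorem3p6 (R : realType) (T : finType) (e : rel T)
  (e_sym : symmetric e) (e_irr : irreflexive e)
  (e_conn : forall x y : T, connect e x y)
  (hL : Lichnerowicz_sharp e R)
  (hD : distance_regular e) :
  diam_eff e R = (maxDeg e)%:R / Kmin e R.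
Proof.
have [b [c hbc]] := hD.
have [lam [[lam_pos [phi [[x0 Hx0] hphi]] _] Hlam]] := hL.
set K := Kmin e R.
have K_gt0 : 0 < K by rewrite /K -Hlam.
have hphi' : forall y, - Laplacian e phi y = K * phi y by move=> y; rewrite hphi Hlam.
have Hseq := @seq_main R b c K (ecc e x0) K_gt0 (c0 e_conn hbc x0) (b_ecc hbc x0)
  (fun m => @c_pos _ _ e_sym e_conn b c hbc x0 m)
  (fun m => @b_pos _ _ e_conn b c hbc x0 m)
  (fun m f => @C1 _ _ R e_sym e_conn b c hbc x0 m f)
  (gg e phi x0)
  (fun n => @Eq_radial _ _ R e_sym e_conn b c hbc K phi hphi' x0 n).
rewrite gg0 // in Hseq.
have {}Hseq := Hseq Hx0.
have HLd : forall x y, Laplacian e (fun v => (dist e x v)%:R) y = (b 0)%:R - K * (dist e x y)%:R.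
  move=> x y.
  have Hn : (dist e x y <= ecc e x0)%N.
    have [y0 Hy0] : exists y0, dist e x0 y0 = dist e x y.
      by apply: (level_transfer e_conn hbc x0 (x' := x)); exists y.
    by rewrite -Hy0; apply: dist_le_ecc.
  rewrite -(Hseq _ Hn) /Laplacian.
  rewrite (F1 e_sym e_conn hbc (fun n => n%:R : R) (erefl (dist e x y))).
  rewrite dS mulr1.
  case Hd: (dist e x y) => [|n] /=; first by rewrite (c0 e_conn hbc x) mul0r addr0 subr0.
  by rewrite dS' mulrN1.
have HS : forall x, \sum_y (dist e x y)%:R = #|T|%:R * (b 0)%:R / K.
  move=> x.
  have := sum_Lap e_sym (fun v => (dist e x v)%:R : R).
  under eq_bigr => y _ do rewrite HLd.
  rewrite sumrB sumr_const -mulr_sumr => /eqP; rewrite subr_eq0 => /eqP H.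
  have E : \sum_y (dist e x y)%:R = K^-1 * (K * \sum_y (dist e x y)%:R :> R) by rewrite mulKf ?gt_eqF.
  rewrite E -H -(mulr_natl (b 0)%:R) mulrC; congr (_ * _ * _).
have HmD : maxDeg e = b 0.
  apply/eqP; rewrite eqn_leq; apply/andP; split.
    by apply/bigmax_leqP => v _; rewrite (Deg_b0 e_irr e_conn hbc v).
  by rewrite -(Deg_b0 e_irr e_conn hbc x0); apply: (@leq_bigmax T (Deg e) x0).
rewrite /diam_eff HmD.
under eq_bigr => x _ do rewrite HS.
rewrite sumr_const.
have HN : #|T|%:R != 0 :> R by rewrite pnatr_eq0 -lt0n; apply/card_gt0P; exists x0.
rewrite -mulr_natl.
field.
by rewrite HN gt_eqF.
Qed.
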